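(* Under the standing setup (in either Scenario I or Scenario II), assume $0<h<\frac{1}{d_{\max}}$ and that the expected graph is strongly connected. Then the system $x(t_{k+1})=(I-hL_{\sigma_k})^{\bar k}x(t_k)$ reaches consensus in probability: for every $x(0)\in\mathbb{R}^n$ and every $\varepsilon>0$, $\lim_{k\to\infty}P\{M(t_k)-m(t_k)\ge\varepsilon\}=0$, where $M(t_k)=\max_i x_i(t_k)$ and $m(t_k)=\min_i x_i(t_k)$. The same conclusion holds for the limiting system $x(t_{k+1})=e^{-L_{\sigma_k}\Delta}x(t_k)$.
   Context: Standing setup. $n\ge3$ agents. $G$ is an undirected connected graph on $\{1,\dots,n\}$ with symmetric $0/1$ adjacency matrix $A=[a_{ij}]$ (zero diagonal), degrees $d_i=\sum_j a_{ij}$, $d_{\max}=\max_i d_i$, and Laplacian $L=\mathrm{diag}(d_1,\dots,d_n)-A$, with entries $l_{ij}$. For a (possibly directed) $0/1$ adjacency matrix $B$ ($b_{ij}=1$ meaning agent $i$ receives from agent $j$), its Laplacian is $\mathrm{diag}(B\mathbf{1})-B$. Scenario I (agents 1,2 may fail to receive): $A_1$ is $A$ with row 1 set to zero, $A_2$ is $A$ with row 2 set to zero, $A_3$ is $A$ with rows 1 and 2 set to zero, $A_4=A$. Scenario II (agents 1,2 may fail to send): same with columns instead of rows. $L_i$ is the Laplacian of $A_i$ (so $L_4=L$). Probabilities $p_1=\alpha,p_2=\beta,p_3=\gamma,p_4=\theta\in(0,1)$ with $\alpha+\beta+\gamma+\theta=1$. The expected graph is the directed graph with weighted adjacency matrix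 $\sum_{i=1}^4 p_iA_i$. Sampling period $h>0$, integer $\bar k\ge1$, $\Delta=\bar k h$, $t_k=k\Delta$. $\sigma_0,\sigma_1,\dots$ are i.i.d. random variables in $\{1,2,3,4\}$ with $P(\sigma_k=i)=p_i$ (the graph is held fixed on each interval of length $\Delta$, during which the delta-operator system $\delta x=-L_{\sigma_k}x$ with step $h$ is run $\bar k$ times). The initial state $x(t_0)=x(0)\in\mathbb{R}^n$ is deterministic. $\mathbf{1}$ is the all-ones column vector. *)

(* Defs.v *)
From Stdlib Require Import Reals Lra Lia List.
Import ListNotations.
Open Scope R_scope.

(* Agents are indexed 0..n-1 (paper's agent i is index i-1);
   the possibly failing agents "1" and "2" are indices 0 and 1. *)

Definition Mat := nat -> nat -> R.
Definition Vec := nat -> R.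

Fixpoint rsum (n : nat) (f : nat -> R) : R :=
  match n with O => 0 | S m => rsum m f + f m end.

Definition deg (n : nat) (A : Mat) (i : nat) : R := rsum n (fun j => A i j).
Definition vmax (n : nat) (x : Vec) : R := fold_right Rmax (x O) (map x (seq 0 n)).
Definition vmin (n : nat) (x : Vec) : R := fold_right Rmin (x O) (map x (seq 0 n)).
Definition dmax (n : nat) (A : Mat) : R := vmax n (deg n A).

Definition lap (n : nat) (B : Mat) : Mat :=
  fun i j => (if Nat.eqb i j then rsum n (fun k => B i k) else 0) - B i j.

(* directed reachability in the weighted graph W (edge u -> v when W v u > 0 or
   W u v > 0 depending on convention; strong connectivity over all ordered pairs
   is insensitive to this choice) *)
Inductive reach (n : nat) (W : Mat) (i : nat) : nat -> Prop :=
  | reach_refl : reach n W i i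
  | reach_step : forall k j, reach n W i k -> (j < n)%nat -> 0 < W k j -> reach n W i j.

Definition strongly_connected (n : nat) (W : Mat) : Prop :=
  forall i j, (i < n)%nat -> (j < n)%nat -> reach n W i j.

Definition simple_connected_graph (n : nat) (A : Mat) : Prop :=
  (forall i j, (i < n)%nat -> (j < n)%nat -> A i j = 0 \/ A i j = 1) /\
  (forall i j, (i < n)%nat -> (j < n)%nat -> A i j = A j i) /\
  (forall i, (i < n)%nat -> A i i = 0) /\
  strongly_connected n A.

Inductive scenario := ScenarioI | ScenarioII.
Inductive mode := m1 | m2 | m3 | m4.

(* A_s : Scenario I zeroes rows (failure to receive), Scenario II columns *)
Definition Amode (sc : scenario) (A : Mat) (s : mode) : Mat :=
  fun i j =>
    let r := match sc with ScenarioI => i | ScenarioII => j end in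
    match s with
    | m1 => if Nat.eqb r 0 then 0 else A i j
    | m2 => if Nat.eqb r 1 then 0 else A i j
    | m3 => if orb (Nat.eqb r 0) (Nat.eqb r 1) then 0 else A i j
    | m4 => A i j
    end.

Definition Lmode (n : nat) (sc : scenario) (A : Mat) (s : mode) : Mat :=
  lap n (Amode sc A s).

Definition prob (al be ga th : R) (s : mode) : R :=
  match s with m1 => al | m2 => be | m3 => ga | m4 => th end.

Definition expected_graph (sc : scenario) (A : Mat) (al be ga th : R) : Mat :=
  fun i j => al * Amode sc A m1 i j + be * Amode sc A m2 i j
           + ga * Amode sc A m3 i j + th * Amode sc A m4 i j.

Definition matvec (n : nat) (M : Mat) (x : Vec) : Vec :=
  fun i => rsum n (fun j => M i j * x j).
Definition mmul (n : nat) (M N : Mat) : Mat :=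
  fun i j => rsum n (fun k => M i k * N k j).
Definition idm : Mat := fun i j => if Nat.eqb i j then 1 else 0.
Fixpoint mpow (n : nat) (M : Mat) (k : nat) : Mat :=
  match k with O => idm | S k' => mmul n M (mpow n M k') end.
Definition mscale (c : R) (M : Mat) : Mat := fun i j => c * M i j.

Definition is_expm (n : nat) (M E : Mat) : Prop :=
  forall i j, (i < n)%nat -> (j < n)%nat ->
    Un_cv (fun N => rsum (S N) (fun k => mpow n M k i j / INR (Factorial.fact k))) (E i j).

Definition euler_step (n : nat) (h : R) (L : Mat) (x : Vec) : Vec :=
  fun i => x i - h * matvec n L x i.
Definition euler_block (n : nat) (h : R) (kbar : nat) (L : Mat) (x : Vec) : Vec :=
  Nat.iter kbar (euler_step n h L) x.

Definition traj (F : mode -> Vec -> Vec) (x0 : Vec) (w : list mode) : Vec :=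
  fold_left (fun x s => F s x) w x0.

Fixpoint words (k : nat) : list (list mode) :=
  match k with
  | O => [ [] ]
  | S k' => flat_map (fun w => map (fun s => w ++ [s]) [m1; m2; m3; m4]) (words k')
  end.

Definition word_prob (p : mode -> R) (w : list mode) : R :=
  fold_right Rmult 1 (map p w).

(* P{ M(t_k) - m(t_k) >= eps } for i.i.d. sigma_k with P(sigma_k = s) = p s;
   the event depends only on sigma_0..sigma_{k-1}, so this finite sum is its
   probability under the product measure. *)
Definition prob_spread_ge (n : nat) (p : mode -> R) (F : mode -> Vec -> Vec)
    (x0 : Vec) (eps : R) (k : nat) : R :=
  fold_right Rplus 0
    (map (fun w => word_prob p w *
                   (if Rle_dec eps (vmax n (traj F x0 w) - vmin n (traj F x0 w))
                    then 1 else 0))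
         (words k)).

(* Main.v *)
Require Import Defs.
From Stdlib Require Import Reals Lra Lia List.
From Coquelicot Require Series.
Import ListNotations.
Open Scope R_scope.

Lemma rsum_ext n f g : (forall k, (k < n)%nat -> f k = g k) -> rsum n f = rsum n g.
Proof. induction n; simpl; intros H; auto. rewrite IHn by (intros; apply H; lia). rewrite H by lia. auto. Qed.

Lemma rsum_le n f g : (forall k, (k < n)%nat -> f k <= g k) -> rsum n f <= rsum n g.
Proof. induction n; simpl; intros H; [lra|]. assert (f n <= g n) by (apply H; lia).
  assert (rsum n f <= rsum n g) by (apply IHn; intros; apply H; lia). lra. Qed.

Lemma rsum_plus n f g : rsum n (fun k => f k + g k) = rsum n f + rsum n g.
Proof. induction n; simpl; [lra|]. rewrite IHn; lra. Qed.

Lemma rsum_scal n c f : rsum n (fun k => c * f k) = c * rsum n f.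
Proof. induction n; simpl; [lra|]. rewrite IHn; lra. Qed.

Lemma rsum_minus n f g : rsum n (fun k => f k - g k) = rsum n f - rsum n g.
Proof. induction n; simpl; [lra|]. rewrite IHn; lra. Qed.

Lemma rsum_const n c : rsum n (fun _ => c) = INR n * c.
Proof. induction n; simpl rsum; [simpl; lra|]. rewrite IHn, S_INR; lra. Qed.

Lemma rsum_nonneg n f : (forall k, (k < n)%nat -> 0 <= f k) -> 0 <= rsum n f.
Proof. intros H. replace 0 with (rsum n (fun _ => 0)). apply rsum_le; auto.
  rewrite rsum_const; lra. Qed.

Lemma rsum_single n f j : (forall k, (k < n)%nat -> 0 <= f k) -> (j < n)%nat -> f j <= rsum n f.
Proof. induction n; simpl; intros H Hj; [lia|].
  destruct (Nat.eq_dec j n). subst. assert (0 <= rsum n f) by (apply rsum_nonneg; intros; apply H; lia). lra.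
  assert (f j <= rsum n f) by (apply IHn; [intros; apply H; lia| lia]). assert (0 <= f n) by (apply H; lia). lra. Qed.

Lemma rsum_delta n i (g : nat -> R) : (i < n)%nat ->
  rsum n (fun l => idm i l * g l) = g i.
Proof. intros Hi. induction n; [lia|]. simpl. destruct (Nat.eq_dec i n).
  - subst. unfold idm at 2. rewrite Nat.eqb_refl.
    replace (rsum n (fun l => idm n l * g l)) with (rsum n (fun _ => 0)). rewrite rsum_const; lra.
    apply rsum_ext. intros k Hk. unfold idm. destruct (Nat.eqb_spec n k); [lia|lra].
  - rewrite IHn by lia. unfold idm. destruct (Nat.eqb_spec i n); [lia|lra]. Qed.

Lemma rsum_swap n m (f : nat -> nat -> R) :
  rsum n (fun i => rsum m (fun j => f i j)) = rsum m (fun j => rsum n (fun i => f i j)).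
Proof. induction n; simpl. rewrite rsum_const; lra. rewrite IHn, <- rsum_plus. auto. Qed.

Lemma rsum_sumf n N (f : nat -> nat -> R) :
  rsum n (fun l => sum_f_R0 (fun k => f l k) N) = sum_f_R0 (fun k => rsum n (fun l => f l k)) N.
Proof. induction N; simpl. auto. rewrite rsum_plus, IHN. auto. Qed.

Lemma rsum_S_sumf N f : rsum (S N) f = sum_f_R0 f N.
Proof. induction N; simpl in *. lra. rewrite <- IHN. auto. Qed.

Lemma rsum_cv n (u : nat -> nat -> R) (l : nat -> R) :
  (forall j, (j < n)%nat -> Un_cv (u j) (l j)) ->
  Un_cv (fun N => rsum n (fun j => u j N)) (rsum n l).
Proof. induction n; simpl; intros H.
  - intros e He; exists O; intros; unfold Rdist; rewrite Rminus_diag, Rabs_R0; lra.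
  - apply CV_plus. apply IHn; intros; apply H; lia. apply H; lia. Qed.

Lemma fr_max_ge (x : Vec) z l : z <= fold_right Rmax z (map x l) /\
  forall i, In i l -> x i <= fold_right Rmax z (map x l).
Proof. induction l as [|a l IH]; simpl. split; [lra| tauto].
  destruct IH as [H1 H2]. split. eapply Rle_trans; [apply H1| apply Rmax_r].
  intros i [<-|Hi]. apply Rmax_l. eapply Rle_trans; [apply H2; auto| apply Rmax_r]. Qed.

Lemma fr_max_le (x : Vec) z l c : z <= c -> (forall i, In i l -> x i <= c) -> fold_right Rmax z (map x l) <= c.
Proof. induction l as [|a l IH]; simpl; intros Hz H; auto.
  apply Rmax_lub. apply H; auto. apply IH; auto. Qed.

Lemma fr_min_le (x : Vec) z l : fold_right Rmin z (map x l) <= z /\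
  forall i, In i l -> fold_right Rmin z (map x l) <= x i.
Proof. induction l as [|a l IH]; simpl. split; [lra| tauto].
  destruct IH as [H1 H2]. split. eapply Rle_trans; [apply Rmin_r| apply H1].
  intros i [<-|Hi]. apply Rmin_l. eapply Rle_trans; [apply Rmin_r|apply H2; auto]. Qed.

Lemma fr_min_ge (x : Vec) z l c : c <= z -> (forall i, In i l -> c <= x i) -> c <= fold_right Rmin z (map x l).
Proof. induction l as [|a l IH]; simpl; intros Hz H; auto.
  apply Rmin_glb. apply H; auto. apply IH; auto. Qed.

Lemma vmax_ge n x i : (i < n)%nat -> x i <= vmax n x.
Proof. intros. apply (proj2 (fr_max_ge x (x O) (seq 0 n))). apply in_seq; lia. Qed.
Lemma vmax_le n x c : (0 < n)%nat -> (forall i, (i < n)%nat -> x i <= c) -> vmax n x <= c.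
Proof. intros. apply fr_max_le. apply H0; auto. intros i Hi; apply in_seq in Hi; apply H0; lia. Qed.
Lemma vmin_le n x i : (i < n)%nat -> vmin n x <= x i.
Proof. intros. apply (proj2 (fr_min_le x (x O) (seq 0 n))). apply in_seq; lia. Qed.
Lemma vmin_ge n x c : (0 < n)%nat -> (forall i, (i < n)%nat -> c <= x i) -> c <= vmin n x.
Proof. intros. apply fr_min_ge. apply H0; auto. intros i Hi; apply in_seq in Hi; apply H0; lia. Qed.

Definition sp n (x : Vec) := vmax n x - vmin n x.
Lemma sp_nonneg n x : (0 < n)%nat -> 0 <= sp n x.
Proof. intros. unfold sp. pose proof (vmax_ge n x O H). pose proof (vmin_le n x O H). lra. Qed.

Lemma pow_le1 x k : 0 <= x <= 1 -> x ^ k <= 1.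
Proof. intros H; induction k; simpl. lra. assert (0 <= x ^ k) by (apply pow_le; lra). nra. Qed.

Section Gen.
Variable n : nat.
Variable p : mode -> R.
Variable F : mode -> Vec -> Vec.

Definition Ex (k : nat) (f : Vec -> R) (x0 : Vec) : R :=
  fold_right Rplus 0 (map (fun w => word_prob p w * f (traj F x0 w)) (words k)).

Definition Tf (f : Vec -> R) (x : Vec) : R :=
  p m1 * f (F m1 x) + p m2 * f (F m2 x) + p m3 * f (F m3 x) + p m4 * f (F m4 x).

Lemma sum_flat_map {A B} (g : B -> R) (h : A -> list B) l :
  fold_right Rplus 0 (map g (flat_map h l)) =
  fold_right Rplus 0 (map (fun w => fold_right Rplus 0 (map g (h w))) l).
Proof. induction l; simpl; auto. rewrite map_app, fold_right_app, <- IHl.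
  generalize (fold_right Rplus 0 (map g (flat_map h l))). clear IHl.
  induction (h a) as [|b t IH]; simpl; intros r. lra. rewrite IH; lra. Qed.

Lemma fr_mult_c (l : list R) c : fold_right Rmult c l = fold_right Rmult 1 l * c.
Proof. induction l; simpl; [lra|]. rewrite IHl; lra. Qed.

Lemma wp_app w s : word_prob p (w ++ [s]) = word_prob p w * p s.
Proof. unfold word_prob. rewrite map_app, fold_right_app. simpl. rewrite fr_mult_c. lra. Qed.

Lemma traj_app x0 w s : traj F x0 (w ++ [s]) = F s (traj F x0 w).
Proof. unfold traj. rewrite fold_left_app. reflexivity. Qed.

Lemma Ex_S k f x0 : Ex (S k) f x0 = Ex k (Tf f) x0.
Proof. unfold Ex. simpl words. rewrite sum_flat_map. f_equal. apply map_ext. intros w.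
  simpl. rewrite !wp_app, !traj_app. unfold Tf. lra. Qed.

Lemma Ex_0 f x0 : Ex 0 f x0 = f x0.
Proof. unfold Ex; simpl. unfold word_prob, traj; simpl. lra. Qed.

Hypothesis p_nonneg : forall s, 0 <= p s.

Lemma Tf_mono f g : (forall x, f x <= g x) -> forall x, Tf f x <= Tf g x.
Proof. intros H x. unfold Tf.
  pose proof (p_nonneg m1); pose proof (p_nonneg m2); pose proof (p_nonneg m3); pose proof (p_nonneg m4).
  pose proof (H (F m1 x)); pose proof (H (F m2 x)); pose proof (H (F m3 x)); pose proof (H (F m4 x)).
  apply Rplus_le_compat; [apply Rplus_le_compat; [apply Rplus_le_compat|]|]; apply Rmult_le_compat_l; auto. Qed.

Lemma Ex_mono k : forall f g, (forall x, f x <= g x) -> forall x0, Ex k f x0 <= Ex k g x0.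
Proof. induction k; intros f g H x0. rewrite !Ex_0; auto.
  rewrite !Ex_S. apply IHk. apply Tf_mono; auto. Qed.

Lemma Ex_ext k f g : (forall x, f x = g x) -> forall x0, Ex k f x0 = Ex k g x0.
Proof. intros H x0. apply Rle_antisym; apply Ex_mono; intros; rewrite H; lra. Qed.

Lemma Tf_ext f g : (forall x, f x = g x) -> forall x, Tf f x = Tf g x.
Proof. intros H x. unfold Tf. rewrite !H. auto. Qed.

Lemma Ex_scal k : forall f c x0, Ex k (fun y => c * f y) x0 = c * Ex k f x0.
Proof. induction k; intros f c x0. rewrite !Ex_0; auto.
  rewrite !Ex_S. rewrite <- IHk. apply Ex_ext. intros x. unfold Tf. lra. Qed.

Lemma Ex_Sl k : forall f x, Ex (S k) f x = Tf (fun y => Ex k f y) x.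
Proof. induction k; intros f x.
  - rewrite Ex_S, Ex_0. apply Tf_ext. intros; rewrite Ex_0; auto.
  - rewrite Ex_S, IHk. apply Tf_ext. intros; rewrite Ex_S; auto. Qed.

Lemma Ex_add k : forall j f x, Ex (k + j) f x = Ex k (fun y => Ex j f y) x.
Proof. induction k; intros j f x. simpl. rewrite Ex_0; auto.
  simpl plus. rewrite !Ex_Sl. apply Tf_ext. intros; apply IHk. Qed.

Hypothesis (Hn : (0 < n)%nat).
Hypothesis p_sum : p m1 + p m2 + p m3 + p m4 = 1.
Hypothesis F_sp : forall s x, sp n (F s x) <= sp n x.

Lemma Tf_sp x : Tf (sp n) x <= sp n x.
Proof. unfold Tf.
  pose proof (p_nonneg m1); pose proof (p_nonneg m2); pose proof (p_nonneg m3); pose proof (p_nonneg m4).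
  pose proof (F_sp m1 x); pose proof (F_sp m2 x); pose proof (F_sp m3 x); pose proof (F_sp m4 x).
  apply Rle_trans with (p m1 * sp n x + p m2 * sp n x + p m3 * sp n x + p m4 * sp n x).
  apply Rplus_le_compat; [apply Rplus_le_compat; [apply Rplus_le_compat|]|]; apply Rmult_le_compat_l; auto.
  replace (p m1 * sp n x + p m2 * sp n x + p m3 * sp n x + p m4 * sp n x) with
    ((p m1 + p m2 + p m3 + p m4) * sp n x) by ring. rewrite p_sum; lra. Qed.

Lemma Ex_sp_le k x : Ex k (sp n) x <= sp n x.
Proof. revert x; induction k; intros x. rewrite Ex_0; lra.
  rewrite Ex_Sl. eapply Rle_trans; [|apply Tf_sp]. apply Tf_mono. auto. Qed.

Lemma Ex_sp_dec k x : Ex (S k) (sp n) x <= Ex k (sp n) x.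
Proof. rewrite Ex_S. apply Ex_mono. apply Tf_sp. Qed.

Lemma Ex_sp_dec' k j x : (j <= k)%nat -> Ex k (sp n) x <= Ex j (sp n) x.
Proof. induction 1. lra. eapply Rle_trans; [apply Ex_sp_dec|auto]. Qed.



Lemma Ex_iter j : forall x, Ex j (sp n) x <=
   (1 - p m4 ^ j) * sp n x + p m4 ^ j * sp n (Nat.iter j (F m4) x).
Proof. induction j; intros x.
  - rewrite Ex_0. simpl. lra.
  - rewrite Ex_Sl. unfold Tf.
    pose proof (p_nonneg m1); pose proof (p_nonneg m2); pose proof (p_nonneg m3); pose proof (p_nonneg m4).
    assert (H4 : p m4 <= 1) by lra.
    assert (Hq : 0 <= p m4 ^ j <= 1) by (split; [apply pow_le; auto| apply pow_le1; lra]).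
    pose proof (F_sp m1 x); pose proof (F_sp m2 x); pose proof (F_sp m3 x); pose proof (F_sp m4 x).
    pose proof (Ex_sp_le j (F m1 x)); pose proof (Ex_sp_le j (F m2 x)); pose proof (Ex_sp_le j (F m3 x)).
    pose proof (IHj (F m4 x)) as HI. rewrite <- Nat.iter_succ_r in HI.
    assert (p m1 * Ex j (sp n) (F m1 x) <= p m1 * sp n x) by (apply Rmult_le_compat_l; lra).
    assert (p m2 * Ex j (sp n) (F m2 x) <= p m2 * sp n x) by (apply Rmult_le_compat_l; lra).
    assert (p m3 * Ex j (sp n) (F m3 x) <= p m3 * sp n x) by (apply Rmult_le_compat_l; lra).
    assert (p m4 * Ex j (sp n) (F m4 x) <= p m4 * ((1 - p m4 ^ j) * sp n x + p m4 ^ j * sp n (Nat.iter (S j) (F m4) x))).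
    { apply Rmult_le_compat_l; auto. assert ((1 - p m4 ^ j) * sp n (F m4 x) <= (1 - p m4 ^ j) * sp n x) by (apply Rmult_le_compat_l; lra). lra. }
    simpl pow. nra. Qed.


Lemma wp_nonneg w : 0 <= word_prob p w.
Proof. induction w; unfold word_prob in *; simpl. lra. apply Rmult_le_pos; auto. Qed.

Lemma list_sum_le {A} (f g : A -> R) l : (forall w, f w <= g w) ->
  fold_right Rplus 0 (map f l) <= fold_right Rplus 0 (map g l).
Proof. intros H; induction l; simpl. lra. pose proof (H a). lra. Qed.

Lemma list_sum_div {A} (f : A -> R) l c : fold_right Rplus 0 (map (fun w => f w / c) l) = fold_right Rplus 0 (map f l) / c.
Proof. induction l; simpl. unfold Rdiv; lra. rewrite IHl. unfold Rdiv; lra. Qed.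

Lemma markov x0 eps k : 0 < eps ->
  0 <= prob_spread_ge n p F x0 eps k <= Ex k (sp n) x0 / eps.
Proof. intros He. unfold prob_spread_ge, Ex. split.
  - replace 0 with (fold_right Rplus 0 (map (fun _ : list mode => 0) (words k))) at 1.
    apply list_sum_le. intros w. apply Rmult_le_pos. apply wp_nonneg. destruct Rle_dec; lra.
    clear. induction (words k); simpl; lra.
  - rewrite <- list_sum_div. apply list_sum_le. intros w. pose proof (wp_nonneg w).
    unfold sp in *. destruct Rle_dec.
    + unfold Rdiv. rewrite Rmult_assoc. apply Rmult_le_compat_l; auto.
      apply (Rmult_le_reg_l eps); auto. rewrite <- Rmult_assoc, Rinv_r_simpl_m by lra. lra.
    + pose proof (sp_nonneg n (traj F x0 w) Hn). unfold sp in H0.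
      rewrite Rmult_0_r. unfold Rdiv. apply Rmult_le_pos; [apply Rmult_le_pos|left; apply Rinv_0_lt_compat]; lra. Qed.

Theorem generic_consensus :
  0 < p m4 ->
  (exists D c, 0 <= c < 1 /\ forall x, sp n (Nat.iter D (F m4) x) <= c * sp n x) ->
  forall x0 eps, 0 < eps -> Un_cv (prob_spread_ge n p F x0 eps) 0.
Proof.
  intros Hp4 [D [c [Hc HD]]] x0 eps Heps.
  set (q := p m4 ^ D).
  assert (Hq : 0 < q <= 1). { split. apply pow_lt; auto. apply pow_le1. pose proof (p_nonneg m1); pose proof (p_nonneg m2); pose proof (p_nonneg m3). lra. }
  set (rho := 1 - q * (1 - c)).
  assert (Hr : 0 <= rho < 1) by (unfold rho; split; nra).
  assert (HED : forall x, Ex D (sp n) x <= rho * sp n x).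
  { intros x. pose proof (Ex_iter D x). pose proof (HD x). fold q in H.
    assert (q * sp n (Nat.iter D (F m4) x) <= q * (c * sp n x)) by (apply Rmult_le_compat_l; lra).
    unfold rho. nra. }
  assert (Hm : forall m, Ex (m * D) (sp n) x0 <= rho ^ m * sp n x0).
  { induction m. simpl. rewrite Ex_0. lra.
    rewrite Nat.mul_succ_l, Ex_add.
    eapply Rle_trans. apply Ex_mono. exact HED. rewrite Ex_scal. simpl.
    rewrite Rmult_assoc. apply Rmult_le_compat_l; lra. }
  intros e He.
  pose proof (sp_nonneg n x0 Hn) as Hs0.
  destruct (pow_lt_1_zero rho) with (y := e * eps / (sp n x0 + 1)) as [m Hmm].
  rewrite Rabs_pos_eq; lra. apply Rdiv_lt_0_compat; nra.
  exists (m * D)%nat. intros k Hk. unfold Rdist. rewrite Rminus_0_r.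
  destruct (markov x0 eps k Heps) as [H1 H2]. rewrite Rabs_pos_eq by auto.
  pose proof (Ex_sp_dec' k (m * D) x0 Hk).
  pose proof (Hmm m (le_n m)). rewrite Rabs_pos_eq in H0 by (apply pow_le; lra).
  assert (Hpos: 0 <= rho ^ m) by (apply pow_le; lra).
  assert (rho ^ m * sp n x0 <= rho ^ m * (sp n x0 + 1)) by nra.
  assert (rho ^ m * (sp n x0 + 1) < e * eps).
  { apply (Rmult_lt_compat_r (sp n x0 + 1)) in H0; [|lra].
    unfold Rdiv in H0. rewrite Rmult_assoc, Rinv_l in H0 by lra. lra. }
  apply Rle_lt_trans with (Ex k (sp n) x0 / eps); auto.
  apply (Rmult_lt_reg_r eps); auto. unfold Rdiv. rewrite Rmult_assoc, Rinv_l by lra. pose proof (Hm m). lra.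
Qed.

End Gen.

Lemma mv_upper n (W : Mat) (x : Vec) M i k g e :
  (forall j, (j < n)%nat -> 0 <= W i j) -> rsum n (W i) = 1 ->
  (forall j, (j < n)%nat -> x j <= M) -> (k < n)%nat -> g <= W i k -> 0 <= e -> x k <= M - e ->
  matvec n W x i <= M - g * e.
Proof. intros HW Hs Hx Hk Hg He Hxk. unfold matvec.
  assert (Heq : rsum n (fun j => W i j * x j) = M - rsum n (fun j => W i j * (M - x j))).
  { rewrite <- (Rmult_1_r M) at 1. rewrite <- Hs. rewrite <- rsum_scal, <- rsum_minus.
    apply rsum_ext; intros; ring. }
  rewrite Heq.
  assert (W i k * (M - x k) <= rsum n (fun j => W i j * (M - x j))).
  { apply (rsum_single n (fun j => W i j * (M - x j))); auto. intros j Hj. apply Rmult_le_pos; auto.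
    pose proof (Hx j Hj); lra. }
  assert (g * e <= W i k * (M - x k)). { assert (0 <= W i k) by auto.
    apply Rle_trans with (W i k * e). apply Rmult_le_compat_r; lra. apply Rmult_le_compat_l; lra. }
  lra. Qed.

Lemma mv_lower n (W : Mat) (x : Vec) m i k g e :
  (forall j, (j < n)%nat -> 0 <= W i j) -> rsum n (W i) = 1 ->
  (forall j, (j < n)%nat -> m <= x j) -> (k < n)%nat -> g <= W i k -> 0 <= e -> m + e <= x k ->
  m + g * e <= matvec n W x i.
Proof. intros HW Hs Hx Hk Hg He Hxk.
  pose proof (mv_upper n W (fun j => - x j) (-m) i k g e HW Hs) as H.
  assert (matvec n W (fun j => - x j) i = - matvec n W x i).
  { unfold matvec. rewrite <- (Rmult_1_l (rsum n (fun j => W i j * x j))). rewrite Ropp_mult_distr_l, <- rsum_scal.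
    apply rsum_ext; intros; ring. }
  rewrite H0 in H. assert (- matvec n W x i <= - m - g * e). apply H; auto.
  intros j Hj; pose proof (Hx j Hj); lra. lra. lra. Qed.

Lemma sp_contract n (G : Vec) x (Hn : (0 < n)%nat) :
  (forall i, (i < n)%nat -> vmin n x <= G i /\ G i <= vmax n x) ->
  vmin n x <= vmin n G /\ vmax n G <= vmax n x.
Proof. intros H. split. apply vmin_ge; auto. intros; apply H; auto. apply vmax_le; auto. intros; apply H; auto. Qed.

Lemma mv_range n W x (Hn : (0 < n)%nat) i : (i < n)%nat ->
  (forall j, (j < n)%nat -> 0 <= W i j) -> rsum n (W i) = 1 ->
  vmin n x <= matvec n W x i /\ matvec n W x i <= vmax n x.
Proof. intros Hi HW Hs. split.
  - replace (vmin n x) with (vmin n x + 0 * 0) by ring. apply (mv_lower n W x _ i i); auto; try lra.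
    intros; apply vmin_le; auto. rewrite Rplus_0_r. apply vmin_le; auto.
  - replace (vmax n x) with (vmax n x - 0 * 0) by ring. apply (mv_upper n W x _ i i); auto; try lra.
    intros; apply vmax_ge; auto. rewrite Rminus_0_r. apply vmax_ge; auto. Qed.

Lemma lap_idm n B i j : lap n B i j = idm i j * rsum n (B i) - B i j.
Proof. unfold lap, idm. destruct (Nat.eqb i j); [rewrite Rmult_1_l | rewrite Rmult_0_l]; reflexivity. Qed.

Lemma lap_rowsum n B i : (i < n)%nat -> rsum n (lap n B i) = 0.
Proof. intros Hi. unfold lap. transitivity (rsum n (fun j => idm i j * rsum n (B i)) - rsum n (B i)).
  rewrite <- rsum_minus. apply rsum_ext; intros; apply lap_idm.
  rewrite (rsum_delta n i (fun _ => rsum n (B i))); auto. ring. Qed.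

Definition EW (h : R) (L : Mat) : Mat := fun i j => idm i j - h * L i j.

Lemma euler_mv n h L x i : (i < n)%nat -> euler_step n h L x i = matvec n (EW h L) x i.
Proof. intros Hi. unfold euler_step, matvec, EW.
  transitivity (rsum n (fun j => idm i j * x j) - h * rsum n (fun j => L i j * x j)).
  rewrite rsum_delta; auto. rewrite <- rsum_scal, <- rsum_minus. apply rsum_ext; intros; ring. Qed.

Section Lap.
Variable n : nat.
Variable B : Mat.
Variable dm h : R.
Hypothesis B_nonneg : forall i j, (i < n)%nat -> (j < n)%nat -> 0 <= B i j.
Hypothesis B_diag : forall i, (i < n)%nat -> B i i = 0.
Hypothesis B_deg : forall i, (i < n)%nat -> rsum n (B i) <= dm.
Hypothesis Hh : 0 < h.
Hypothesis Hhd : h * dm < 1.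

Lemma EW_rowsum i : (i < n)%nat -> rsum n (EW h (lap n B) i) = 1.
Proof. intros Hi. unfold EW. rewrite rsum_minus, rsum_scal, lap_rowsum by auto.
  rewrite (rsum_ext n _ (fun j => idm i j * 1)) by (intros; ring). rewrite rsum_delta; auto. ring. Qed.

Lemma EW_diag i : (i < n)%nat -> 1 - h * dm <= EW h (lap n B) i i.
Proof. intros Hi. unfold EW. rewrite lap_idm. unfold idm. rewrite Nat.eqb_refl. rewrite B_diag by auto.
  pose proof (B_deg i Hi). nra. Qed.

Lemma EW_off i j : i <> j -> EW h (lap n B) i j = h * B i j.
Proof. intros Hij. unfold EW. rewrite lap_idm. unfold idm. destruct (Nat.eqb_spec i j); [lia|]. ring. Qed.

Lemma EW_nonneg i j : (i < n)%nat -> (j < n)%nat -> 0 <= EW h (lap n B) i j.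
Proof. intros Hi Hj. destruct (Nat.eq_dec i j). subst. pose proof (EW_diag j Hi). lra.
  rewrite EW_off by auto. apply Rmult_le_pos; [lra|auto]. Qed.

Lemma euler_range (Hn : (0 < n)%nat) x : vmin n x <= vmin n (euler_step n h (lap n B) x) /\
   vmax n (euler_step n h (lap n B) x) <= vmax n x.
Proof. apply sp_contract; auto. intros i Hi. rewrite euler_mv by auto. apply mv_range; auto.
  intros; apply EW_nonneg; auto. apply EW_rowsum; auto. Qed.

Lemma euler_iter_range (Hn : (0 < n)%nat) k x : vmin n x <= vmin n (Nat.iter k (euler_step n h (lap n B)) x) /\
   vmax n (Nat.iter k (euler_step n h (lap n B)) x) <= vmax n x.
Proof. induction k; simpl. lra. pose proof (euler_range Hn (Nat.iter k (euler_step n h (lap n B)) x)). lra. Qed.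

End Lap.

Lemma Amode_cases sc A s i j : Amode sc A s i j = 0 \/ Amode sc A s i j = A i j.
Proof. unfold Amode. destruct sc, s; cbv zeta;
  repeat match goal with |- context [if ?b then _ else _] => destruct b end; auto. Qed.

Inductive near (n : nat) (A : Mat) : nat -> nat -> Prop :=
| near0 : near n A 0 0
| nearS : forall t i, near n A t i -> near n A (S t) i
| nearE : forall t i k, near n A t k -> (k < n)%nat -> (i < n)%nat -> 0 < A i k -> near n A (S t) i.

Lemma near_lt n A t i : (0 < n)%nat -> near n A t i -> (i < n)%nat.
Proof. intros Hn H; induction H; auto. Qed.

Lemma near_plus n A d t i : near n A t i -> near n A (d + t) i.
Proof. intros H; induction d; simpl; auto. apply nearS; auto. Qed.

Lemma near_le n A t t' i : (t <= t')%nat -> near n A t i -> near n A t' i.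
Proof. intros Hle H. replace t' with ((t' - t) + t)%nat by lia. apply near_plus; auto. Qed.

Section Graph.
Variable n : nat.
Variable A : Mat.
Hypothesis Hn : (0 < n)%nat.
Hypothesis HG : simple_connected_graph n A.

Lemma A01 i j : (i < n)%nat -> (j < n)%nat -> A i j = 0 \/ A i j = 1.
Proof. destruct HG as [H _]; auto. Qed.
Lemma Asym i j : (i < n)%nat -> (j < n)%nat -> A i j = A j i.
Proof. destruct HG as [_ [H _]]; auto. Qed.
Lemma Adiag i : (i < n)%nat -> A i i = 0.
Proof. destruct HG as [_ [_ [H _]]]; auto. Qed.
Lemma Anonneg i j : (i < n)%nat -> (j < n)%nat -> 0 <= A i j.
Proof. intros Hi Hj; destruct (A01 i j Hi Hj); lra. Qed.

Lemma Amode_nonneg sc s i j : (i < n)%nat -> (j < n)%nat -> 0 <= Amode sc A s i j.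
Proof. intros; destruct (Amode_cases sc A s i j) as [->| ->]; [lra| apply Anonneg; auto]. Qed.
Lemma Amode_le sc s i j : (i < n)%nat -> (j < n)%nat -> Amode sc A s i j <= A i j.
Proof. intros; destruct (Amode_cases sc A s i j) as [->| ->]; [apply Anonneg; auto| lra]. Qed.
Lemma Amode_diag sc s i : (i < n)%nat -> Amode sc A s i i = 0.
Proof. intros; destruct (Amode_cases sc A s i i) as [->| ->]; auto. apply Adiag; auto. Qed.
Lemma Amode_deg sc s i : (i < n)%nat -> rsum n (Amode sc A s i) <= dmax n A.
Proof. intros Hi. apply Rle_trans with (deg n A i). unfold deg. apply rsum_le; intros; apply Amode_le; auto.
  unfold dmax. apply vmax_ge; auto. Qed.
Lemma A_deg i : (i < n)%nat -> rsum n (A i) <= dmax n A.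
Proof. intros Hi. unfold dmax. apply (vmax_ge n (deg n A) i Hi). Qed.

Lemma reach_near j : reach n A 0 j -> (j < n)%nat /\ exists t, near n A t j.
Proof. intros H. induction H as [|k j Hr [Hk [t Ht]] Hj HA]. split; auto. exists O; constructor.
  split; auto. exists (S t). apply (nearE n A t j k); auto. rewrite Asym; auto. Qed.

Lemma all_near : exists T, forall i, (i < n)%nat -> near n A T i.
Proof.
  assert (forall m, (m <= n)%nat -> exists T, forall i, (i < m)%nat -> near n A T i).
  { induction m; intros Hm. exists O; intros; lia.
    destruct IHm as [T HT]; [lia|].
    destruct HG as [_ [_ [_ Hc]]]. destruct (reach_near m (Hc O m Hn ltac:(lia))) as [_ [t Ht]].
    exists (T + t)%nat. intros i Hi. destruct (Nat.eq_dec i m). subst. apply near_plus; auto.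
    replace (T + t)%nat with (t + T)%nat by lia. apply near_plus. apply HT; lia. }
  apply H; lia. Qed.

Variable h : R.
Hypothesis Hh : 0 < h.
Hypothesis Hhd : h * dmax n A < 1.

Definition gam := Rmin (1 - h * dmax n A) h.
Lemma gam_pos : 0 < gam.
Proof. unfold gam. apply Rmin_glb_lt; lra. Qed.
Lemma gam_le1 : gam <= 1.
Proof. unfold gam. assert (0 <= dmax n A). { eapply Rle_trans; [|apply (A_deg O Hn)]. apply rsum_nonneg. intros; apply Anonneg; auto. }
  eapply Rle_trans. apply Rmin_l. nra. Qed.

Lemma euler_inv x0 t : forall i, (i < n)%nat ->
  let y := Nat.iter t (euler_step n h (lap n A)) x0 in
  (vmin n x0 <= y i <= vmax n x0) /\
  (near n A t i -> y i <= vmax n x0 - gam ^ t * (vmax n x0 - x0 O) /\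
                   vmin n x0 + gam ^ t * (x0 O - vmin n x0) <= y i).
Proof.
  assert (HAn : forall i j, (i < n)%nat -> (j < n)%nat -> 0 <= A i j) by (intros; apply Anonneg; auto).
  pose proof gam_pos as Hg.
  pose proof (vmax_ge n x0 O Hn). pose proof (vmin_le n x0 O Hn).
  induction t; intros i Hi y; unfold y; clear y.
  - simpl. split. split; [apply vmin_le| apply vmax_ge]; auto.
    intros Hnear. inversion Hnear; subst. lra.
  - simpl Nat.iter. rewrite euler_mv by auto.
    set (y := Nat.iter t (euler_step n h (lap n A)) x0).
    assert (Hup : forall j, (j < n)%nat -> y j <= vmax n x0) by (intros j Hj; apply (IHt j Hj)).
    assert (Hlo : forall j, (j < n)%nat -> vmin n x0 <= y j) by (intros j Hj; apply (IHt j Hj)).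
    assert (HWn : forall j, (j < n)%nat -> 0 <= EW h (lap n A) i j) by (intros; apply (EW_nonneg n A (dmax n A)); auto; apply Adiag || apply A_deg).
    assert (HWs : rsum n (EW h (lap n A) i) = 1) by (apply EW_rowsum; auto).
    assert (Hgt : 0 <= gam ^ t) by (apply pow_le; lra).
    split.
    + split.
      * replace (vmin n x0) with (vmin n x0 + 0 * 0) by ring. apply (mv_lower n _ y _ i i); auto; try lra. rewrite Rplus_0_r; auto.
      * replace (vmax n x0) with (vmax n x0 - 0 * 0) by ring. apply (mv_upper n _ y _ i i); auto; try lra. rewrite Rminus_0_r; auto.
    + intros Hnear.
      assert (Hk : exists k, (k < n)%nat /\ gam <= EW h (lap n A) i k /\ near n A t k).
      { inversion Hnear; subst.
        - exists i. split; auto. split; auto. eapply Rle_trans; [apply Rmin_l|]. apply (EW_diag n A); auto. apply Adiag. apply A_deg.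
        - exists k. split; auto. split; auto.
          assert (i <> k). { intros ->. rewrite Adiag in H5; auto. lra. }
          rewrite (EW_off n A) by auto. destruct (A01 i k) as [E|E]; auto; rewrite E in *. lra.
          rewrite Rmult_1_r. apply Rmin_r. }
      destruct Hk as [k [Hk [Hgk Hnk]]]. destruct (IHt k Hk) as [_ Hb]. specialize (Hb Hnk). fold y in Hb.
      simpl pow. rewrite !Rmult_assoc. split.
      * apply (mv_upper n _ y _ i k); auto. apply Rmult_le_pos; lra. lra.
      * apply (mv_lower n _ y _ i k); auto. apply Rmult_le_pos; lra. lra.
Qed.

Lemma iter_mul {X} (f : X -> X) k D x : Nat.iter D (Nat.iter k f) x = Nat.iter (D * k) f x.
Proof. induction D; simpl; auto. rewrite IHD, <- Nat.iter_add. f_equal. Qed.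

Lemma euler_contract kbar : (1 <= kbar)%nat -> exists D c, 0 <= c < 1 /\
   forall x, sp n (Nat.iter D (euler_block n h kbar (lap n A)) x) <= c * sp n x.
Proof.
  intros Hk. destruct all_near as [T HT]. exists T, (1 - gam ^ (T * kbar)).
  pose proof gam_pos. pose proof gam_le1.
  assert (0 < gam ^ (T * kbar) <= 1) by (split; [apply pow_lt; auto| apply pow_le1; lra]).
  split. lra.
  intros x. unfold euler_block. rewrite iter_mul.
  set (y := Nat.iter (T * kbar) (euler_step n h (lap n A)) x).
  assert (forall i, (i < n)%nat -> y i <= vmax n x - gam ^ (T * kbar) * (vmax n x - x O) /\
                   vmin n x + gam ^ (T * kbar) * (x O - vmin n x) <= y i).
  { intros i Hi. apply (euler_inv x (T * kbar) i Hi). apply near_le with T. nia. auto. }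
  unfold sp. assert (vmax n y <= vmax n x - gam ^ (T * kbar) * (vmax n x - x O)) by (apply vmax_le; auto; intros; apply H2; auto).
  assert (vmin n x + gam ^ (T * kbar) * (x O - vmin n x) <= vmin n y) by (apply vmin_ge; auto; intros; apply H2; auto).
  nra. Qed.

End Graph.

Lemma Cn0 p : C p 0 = 1.
Proof. unfold C. rewrite Nat.sub_0_r. simpl (INR (Factorial.fact 0)). rewrite Rmult_1_l. unfold Rdiv. apply Rinv_r. apply INR_fact_neq_0. Qed.
Lemma Cnn p : C p p = 1.
Proof. unfold C. rewrite Nat.sub_diag. simpl (INR (Factorial.fact 0)). rewrite Rmult_1_r. unfold Rdiv. apply Rinv_r. apply INR_fact_neq_0. Qed.

Lemma binom_shift (s : nat -> R) (y : R) N :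
  sum_f_R0 (fun k => C N k * y ^ k * s (S (N - k)%nat)) N + sum_f_R0 (fun k => C N k * y ^ (S k) * s (N - k)%nat) N
  = sum_f_R0 (fun k => C (S N) k * y ^ k * s (S N - k)%nat) (S N).
Proof.
  destruct N as [|m].
  - simpl. rewrite !Cn0, Cnn. ring.
  - rewrite (decomp_sum (fun k => C (S m) k * y ^ k * s (S (S m - k)%nat)) (S m)) by lia.
    rewrite (tech5 (fun k => C (S m) k * y ^ S k * s (S m - k)%nat) m).
    rewrite (decomp_sum (fun k => C (S (S m)) k * y ^ k * s (S (S m) - k)%nat) (S (S m))) by lia.
    simpl pred.
    rewrite (tech5 (fun i => C (S (S m)) (S i) * y ^ S i * s (S (S m) - S i)%nat) m).
    rewrite !Cn0, !Cnn.
    replace (sum_f_R0 (fun i => C (S (S m)) (S i) * y ^ S i * s (S (S m) - S i)%nat) m)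
      with (sum_f_R0 (fun i => C (S m) (S i) * y ^ S i * s (S (S m - S i))%nat) m
          + sum_f_R0 (fun i => C (S m) i * y ^ S i * s (S m - i)%nat) m).
    + replace (S (S m) - S (S m))%nat with 0%nat by lia. replace (S m - S m)%nat with 0%nat by lia.
      replace (S (S m - 0))%nat with (S (S m) - 0)%nat by lia. simpl (y ^ 0). ring.
    + rewrite <- plus_sum. apply sum_eq. intros i Hi. rewrite <- (pascal (S m) i) by lia.
      replace (S (S m - S i)) with (S m - i)%nat by lia.
      replace (S (S m) - S i)%nat with (S m - i)%nat by lia. ring.
Qed.

Lemma Un_cv_ext u v l : (forall N, u N = v N) -> Un_cv u l -> Un_cv v l.
Proof. intros H Hu e He. destruct (Hu e He) as [N HN]. exists N. intros k Hk. rewrite <- H. auto. Qed.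

Lemma sumf_single f m : (forall k, 0 <= f k) -> f m <= sum_f_R0 f m.
Proof. intros H. destruct m. simpl; lra. rewrite tech5. pose proof (cond_pos_sum f m H). lra. Qed.

Lemma idm_range i j : 0 <= idm i j <= 1.
Proof. unfold idm. destruct (Nat.eqb i j); lra. Qed.

Section Exp.
Variable n : nat.
Hypothesis Hn : (0 < n)%nat.
Variable B : Mat.
Variables dm t : R.
Hypothesis B_nonneg : forall i j, (i < n)%nat -> (j < n)%nat -> 0 <= B i j.
Hypothesis B_le1 : forall i j, (i < n)%nat -> (j < n)%nat -> B i j <= 1.
Hypothesis B_diag : forall i, (i < n)%nat -> B i i = 0.
Hypothesis B_deg : forall i, (i < n)%nat -> rsum n (B i) <= dm.
Hypothesis Ht : 0 < t.

Definition cc := dm + 1.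
Definition aa := t * cc.
Definition Qm : Mat := fun i j => t * (cc * idm i j - lap n B i j).
Definition Mm : Mat := mscale (- t) (lap n B).

Lemma Mm_eq i j : Mm i j = Qm i j - aa * idm i j.
Proof. unfold Mm, mscale, Qm, aa. ring. Qed.

Lemma deg_nonneg i : (i < n)%nat -> 0 <= rsum n (B i).
Proof. intros; apply rsum_nonneg; intros; apply B_nonneg; auto. Qed.

Lemma dm_nonneg : 0 <= dm.
Proof. pose proof (deg_nonneg O Hn). pose proof (B_deg O Hn). lra. Qed.

Lemma Q_diag i : (i < n)%nat -> Qm i i = t * (cc - rsum n (B i)).
Proof. intros Hi. unfold Qm. rewrite lap_idm. unfold idm. rewrite Nat.eqb_refl, B_diag by auto. ring. Qed.

Lemma Q_off i j : i <> j -> Qm i j = t * B i j.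
Proof. intros H. unfold Qm. rewrite lap_idm. unfold idm. destruct (Nat.eqb_spec i j); [lia|]. ring. Qed.

Lemma Q_range i j : (i < n)%nat -> (j < n)%nat -> 0 <= Qm i j <= t * cc.
Proof. intros Hi Hj. unfold cc. pose proof dm_nonneg. destruct (Nat.eq_dec i j).
  - subst. rewrite Q_diag by auto. unfold cc. pose proof (deg_nonneg j Hi). pose proof (B_deg j Hi). split; nra.
  - rewrite Q_off by auto. pose proof (B_nonneg i j Hi Hj). pose proof (B_le1 i j Hi Hj). split; nra. Qed.

Lemma Q_diag_pos i : (i < n)%nat -> 0 < Qm i i.
Proof. intros Hi. rewrite Q_diag by auto. unfold cc. pose proof (B_deg i Hi). nra. Qed.

Definition KK := INR n * (t * cc).

Lemma Qpow_bound m : forall i j, (i < n)%nat -> (j < n)%nat -> 0 <= mpow n Qm m i j <= KK ^ m.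
Proof. induction m; intros i j Hi Hj.
  - simpl. apply idm_range.
  - simpl mpow. unfold mmul. split.
    + apply rsum_nonneg. intros l Hl. apply Rmult_le_pos. apply Q_range; auto. apply IHm; auto.
    + apply Rle_trans with (rsum n (fun _ => t * cc * KK ^ m)).
      * apply rsum_le. intros l Hl. apply Rmult_le_compat. apply Q_range; auto. apply IHm; auto.
        apply Q_range; auto. apply IHm; auto.
      * rewrite rsum_const. unfold KK. simpl. lra. Qed.

Lemma Mpow_binom N : forall i, (i < n)%nat -> forall j,
  mpow n Mm N i j = sum_f_R0 (fun k => C N k * (- aa) ^ k * mpow n Qm (N - k) i j) N.
Proof. induction N; intros i Hi j.
  - simpl. rewrite Cn0. ring.
  - simpl mpow at 1. unfold mmul.
    set (X := fun l => sum_f_R0 (fun k => C N k * (- aa) ^ k * mpow n Qm (N - k) l j) N).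
    rewrite (rsum_ext n _ (fun l => Qm i l * X l - aa * (idm i l * X l))).
    2:{ intros l Hl. rewrite IHN by auto. rewrite Mm_eq. unfold X. ring. }
    rewrite rsum_minus, rsum_scal, rsum_delta by auto.
    rewrite (rsum_ext n _ (fun l => sum_f_R0 (fun k => C N k * (- aa) ^ k * (Qm i l * mpow n Qm (N - k) l j)) N)).
    2:{ intros l Hl. unfold X. rewrite scal_sum. apply sum_eq. intros; ring. }
    rewrite rsum_sumf.
    rewrite <- (binom_shift (fun m => mpow n Qm m i j) (- aa) N).
    unfold X. rewrite scal_sum.
    assert (H1 : sum_f_R0 (fun k => rsum n (fun l => C N k * (- aa) ^ k * (Qm i l * mpow n Qm (N - k) l j))) N
       = sum_f_R0 (fun k => C N k * (- aa) ^ k * mpow n Qm (S (N - k)) i j) N).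
    { apply sum_eq. intros k Hk. rewrite rsum_scal. reflexivity. }
    assert (H2 : sum_f_R0 (fun k => C N k * (- aa) ^ S k * mpow n Qm (N - k) i j) N
       = -1 * sum_f_R0 (fun k => C N k * (- aa) ^ k * mpow n Qm (N - k) i j * aa) N).
    { rewrite scal_sum. apply sum_eq. intros k Hk. simpl pow. ring. }
    rewrite H1, H2. ring.
Qed.

Lemma Mpow_cauchy N i j : (i < n)%nat ->
  mpow n Mm N i j / INR (Factorial.fact N) =
  sum_f_R0 (fun k => (/ INR (Factorial.fact k) * (- aa) ^ k) * (mpow n Qm (N - k) i j / INR (Factorial.fact (N - k)))) N.
Proof. intros Hi. rewrite Mpow_binom by auto. unfold Rdiv. rewrite Rmult_comm, scal_sum.
  apply sum_eq. intros k Hk. unfold C.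
  pose proof (INR_fact_neq_0 N). pose proof (INR_fact_neq_0 k). pose proof (INR_fact_neq_0 (N - k)).
  field; auto. Qed.

Definition Yf i j := fun m => mpow n Qm m i j / INR (Factorial.fact m).

Lemma Yf_nonneg i j m : (i < n)%nat -> (j < n)%nat -> 0 <= Yf i j m.
Proof. intros. unfold Yf. apply Rmult_le_pos. apply Qpow_bound; auto. left; apply Rinv_0_lt_compat, INR_fact_lt_0. Qed.

Lemma Y_series i j : (i < n)%nat -> (j < n)%nat -> {l | Un_cv (fun N => sum_f_R0 (Yf i j) N) l}.
Proof. intros Hi Hj. apply Rseries_CV_comp with (Bn := fun m => / INR (Factorial.fact m) * KK ^ m).
  - intros m. split. apply Yf_nonneg; auto. unfold Yf, Rdiv. rewrite Rmult_comm. apply Rmult_le_compat_l.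
    left; apply Rinv_0_lt_compat, INR_fact_lt_0. apply Qpow_bound; auto.
  - exists (exp KK). unfold exp. destruct (exist_exp KK) as [l Hl]. simpl. exact Hl. Qed.

Lemma exp_in_exp x : infinite_sum (fun k => / INR (Factorial.fact k) * x ^ k) (exp x).
Proof. unfold exp. destruct (exist_exp x) as [l Hl]. simpl. exact Hl. Qed.

Variable E : Mat.
Hypothesis HE : is_expm n Mm E.

Lemma E_factor i j : (i < n)%nat -> (j < n)%nat ->
  exists Sv, E i j = exp (- aa) * Sv /\ forall m, Yf i j m <= Sv.
Proof. intros Hi Hj. destruct (Y_series i j Hi Hj) as [Sv HS]. exists Sv. split.
  - assert (Hm := Series.is_series_mult (fun k => / INR (Factorial.fact k) * (- aa) ^ k) (Yf i j) (exp (- aa)) Sv).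
    assert (Hc : infinite_sum (fun N => sum_f_R0 (fun k => / INR (Factorial.fact k) * (- aa) ^ k * Yf i j (N - k)) N) (exp (- aa) * Sv)).
    { apply Series.is_series_Reals. apply Hm.
      - apply Series.is_series_Reals. apply exp_in_exp.
      - apply Series.is_series_Reals. exact HS.
      - exists (exp aa). apply Series.is_series_Reals.
        apply Un_cv_ext with (2 := exp_in_exp aa). intros N. apply sum_eq. intros k Hk.
        rewrite Rabs_mult, <- RPow_abs, Rabs_Ropp. unfold aa, cc.
        pose proof dm_nonneg. rewrite (Rabs_pos_eq (t * (dm + 1))) by nra.
        rewrite (Rabs_pos_eq (/ _)). auto. left; apply Rinv_0_lt_compat, INR_fact_lt_0.
      - exists Sv. apply Series.is_series_Reals. apply Un_cv_ext with (2 := HS). intros N. apply sum_eq. intros k Hk.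
        rewrite Rabs_pos_eq; auto. apply Yf_nonneg; auto. }
    apply (UL_sequence (fun N => rsum (S N) (fun k => mpow n Mm k i j / INR (Factorial.fact k)))).
    apply HE; auto.
    apply Un_cv_ext with (2 := Hc). intros N. rewrite rsum_S_sumf. apply sum_eq. intros k Hk.
    rewrite Mpow_cauchy by auto. unfold Yf. apply sum_eq. intros; ring.
  - intros m. eapply Rle_trans. apply sumf_single. intros; apply Yf_nonneg; auto.
    apply sum_incr; auto. intros; apply Yf_nonneg; auto. Qed.

Lemma E_nonneg i j : (i < n)%nat -> (j < n)%nat -> 0 <= E i j.
Proof. intros Hi Hj. destruct (E_factor i j Hi Hj) as [Sv [-> HS]]. apply Rmult_le_pos. left; apply exp_pos.
  eapply Rle_trans; [|apply (HS O)]. apply Yf_nonneg; auto. Qed.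

Lemma Qpow_near T i : near n B T i -> 0 < mpow n Qm T i O.
Proof. induction 1.
  - simpl. unfold idm. simpl. lra.
  - pose proof (near_lt n B t0 i Hn H) as Hi. simpl mpow. unfold mmul.
    eapply Rlt_le_trans; [|apply (rsum_single n (fun l => Qm i l * mpow n Qm t0 l O) i)]; auto.
    apply Rmult_lt_0_compat; auto. apply Q_diag_pos; auto.
    intros; apply Rmult_le_pos; apply Q_range || apply Qpow_bound; auto.
  - simpl mpow. unfold mmul.
    eapply Rlt_le_trans; [|apply (rsum_single n (fun l => Qm i l * mpow n Qm t0 l O) k)]; auto.
    apply Rmult_lt_0_compat; auto. rewrite Q_off. apply Rmult_lt_0_compat; auto.
    intros ->. rewrite B_diag in H2; auto. lra.
    intros; apply Rmult_le_pos; apply Q_range || apply Qpow_bound; auto. Qed.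

Lemma E_pos T i : near n B T i -> 0 < E i O.
Proof. intros H. pose proof (near_lt n B T i Hn H) as Hi. destruct (E_factor i O Hi Hn) as [Sv [-> HS]].
  apply Rmult_lt_0_compat. apply exp_pos. eapply Rlt_le_trans; [|apply (HS T)].
  unfold Yf. apply Rdiv_lt_0_compat. apply Qpow_near; auto. apply INR_fact_lt_0. Qed.

Lemma Mpow_rowsum k : forall i, (i < n)%nat ->
  rsum n (fun j => mpow n Mm k i j) = match k with O => 1 | _ => 0 end.
Proof. induction k; intros i Hi.
  - simpl. rewrite (rsum_ext n _ (fun j => idm i j * 1)) by (intros; ring). apply rsum_delta; auto.
  - simpl mpow. unfold mmul. rewrite rsum_swap.
    rewrite (rsum_ext n _ (fun l => (match k with O => 1 | _ => 0 end) * Mm i l)).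
    2:{ intros l Hl. rewrite <- (IHk l Hl). rewrite Rmult_comm, <- rsum_scal. auto. }
    rewrite rsum_scal. unfold Mm, mscale. rewrite rsum_scal, lap_rowsum by auto. ring. Qed.

Lemma E_rowsum i : (i < n)%nat -> rsum n (E i) = 1.
Proof. intros Hi.
  assert (H := rsum_cv n (fun j N => rsum (S N) (fun k => mpow n Mm k i j / INR (Factorial.fact k))) (E i)).
  apply (UL_sequence _ _ _ (H (fun j Hj => HE i j Hi Hj))).
  apply Un_cv_ext with (u := fun _ => 1). 2:{ intros e He; exists O; intros; unfold Rdist; rewrite Rminus_diag, Rabs_R0; lra. }
  intros N. rewrite rsum_swap.
  rewrite (rsum_ext (S N) _ (fun k => (match k with O => 1 | _ => 0 end) / INR (Factorial.fact k))).
  2:{ intros k Hk. rewrite <- (Mpow_rowsum k i Hi). unfold Rdiv. rewrite Rmult_comm, <- rsum_scal. apply rsum_ext; intros; ring. }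
  induction N. simpl. lra. simpl rsum in *. rewrite <- IHN. unfold Rdiv. ring. Qed.

End Exp.

Lemma fin_min n (f : nat -> R) : (forall i, (i < n)%nat -> 0 < f i) ->
  exists d, 0 < d /\ forall i, (i < n)%nat -> d <= f i.
Proof. induction n; intros H. exists 1; split; [lra| intros; lia].
  destruct IHn as [d [Hd Hf]]. intros; apply H; lia.
  exists (Rmin d (f n)). split. { apply Rmin_glb_lt; auto. }
  intros i Hi. destruct (Nat.eq_dec i n). subst; apply Rmin_r.
  eapply Rle_trans; [apply Rmin_l| apply Hf; lia]. Qed.

Theorem theorem2 :
  forall (n : nat) (sc : scenario) (A : Mat) (al be ga th h : R) (kbar : nat),
    (3 <= n)%nat ->
    simple_connected_graph n A ->
    0 < al -> 0 < be -> 0 < ga -> 0 < th -> al + be + ga + th = 1 ->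
    (1 <= kbar)%nat ->
    0 < h -> h < 1 / dmax n A ->
    strongly_connected n (expected_graph sc A al be ga th) ->
    (forall (x0 : Vec) (eps : R), 0 < eps ->
       Un_cv (prob_spread_ge n (prob al be ga th)
                (fun s => euler_block n h kbar (Lmode n sc A s)) x0 eps) 0)
    /\
    (forall E : mode -> Mat,
       (forall s, is_expm n (mscale (- (INR kbar * h)) (Lmode n sc A s)) (E s)) ->
       forall (x0 : Vec) (eps : R), 0 < eps ->
         Un_cv (prob_spread_ge n (prob al be ga th)
                  (fun s x => matvec n (E s) x) x0 eps) 0).
Proof.
  intros n sc A al be ga th h kbar Hn3 HG Hal Hbe Hga Hth Hsum Hk Hh Hhd _.
  assert (Hn : (0 < n)%nat) by lia.
  assert (Hdm0 : 0 <= dmax n A).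
  { eapply Rle_trans; [|apply (A_deg n A O Hn)]. apply rsum_nonneg. intros; apply (Anonneg n A HG); auto. }
  assert (Hhdm : h * dmax n A < 1).
  { destruct (Req_dec (dmax n A) 0) as [E0|E0].
    - rewrite E0 in Hhd. unfold Rdiv in Hhd. rewrite Rinv_0 in Hhd. lra.
    - assert (h * dmax n A < 1 / dmax n A * dmax n A) by (apply Rmult_lt_compat_r; lra).
      replace (1 / dmax n A * dmax n A) with 1 in H by (field; auto). auto. }
  assert (Hp : forall s, 0 <= prob al be ga th s) by (destruct s; simpl; lra).
  assert (Hps : prob al be ga th m1 + prob al be ga th m2 + prob al be ga th m3 + prob al be ga th m4 = 1) by (simpl; lra).
  assert (HBn : forall s i j, (i < n)%nat -> (j < n)%nat -> 0 <= Amode sc A s i j) by (intros; apply (Amode_nonneg n A HG); auto).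
  assert (HBd : forall s i, (i < n)%nat -> Amode sc A s i i = 0) by (intros; apply (Amode_diag n A HG); auto).
  assert (HBg : forall s i, (i < n)%nat -> rsum n (Amode sc A s i) <= dmax n A) by (intros; apply (Amode_deg n A HG); auto).
  assert (HB1 : forall s i j, (i < n)%nat -> (j < n)%nat -> Amode sc A s i j <= 1).
  { intros. eapply Rle_trans. apply (Amode_le n A HG); auto. destruct (A01 n A HG i j); auto; lra. }
  split.
  - intros x0 eps Heps.
    apply (generic_consensus n _ _ Hp Hn Hps); auto.
    + intros s x. pose proof (euler_iter_range n (Amode sc A s) (dmax n A) h (HBn s) (HBd s) (HBg s) Hh Hhdm Hn kbar x).
      unfold sp. unfold euler_block, Lmode. lra.
    + exact (euler_contract n A Hn HG h Hh Hhdm kbar Hk).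
  - intros E HE x0 eps Heps.
    assert (Ht : 0 < INR kbar * h). { apply Rmult_lt_0_compat; auto. apply lt_0_INR; lia. }
    assert (HEn : forall s i j, (i < n)%nat -> (j < n)%nat -> 0 <= E s i j)
      by (intros; apply (E_nonneg n Hn (Amode sc A s) (dmax n A) (INR kbar * h) (HBn s) (HB1 s) (HBd s) (HBg s) Ht (E s) (HE s)); auto).
    assert (HEs : forall s i, (i < n)%nat -> rsum n (E s i) = 1)
      by (intros; apply (E_rowsum n (Amode sc A s) (INR kbar * h) (E s) (HE s)); auto).
    apply (generic_consensus n _ _ Hp Hn Hps); auto.
    + intros s x. assert (H := sp_contract n (matvec n (E s) x) x Hn).
      unfold sp. assert (vmin n x <= vmin n (matvec n (E s) x) /\ vmax n (matvec n (E s) x) <= vmax n x).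
      { apply H. intros i Hi. apply mv_range; auto. }
      lra.
    + destruct (all_near n A Hn HG) as [T HT].
      assert (Hpos : forall i, (i < n)%nat -> 0 < E m4 i O).
      { intros i Hi. apply (E_pos n Hn (Amode sc A m4) (dmax n A) (INR kbar * h) (HBn m4) (HB1 m4) (HBd m4) (HBg m4) Ht (E m4) (HE m4) T i).
        exact (HT i Hi). }
      destruct (fin_min n (fun i => E m4 i O) Hpos) as [d [Hd Hdf]].
      assert (Hd1 : d <= 1).
      { eapply Rle_trans. apply (Hdf O Hn). rewrite <- (HEs m4 O Hn).
        apply (rsum_single n (E m4 O)); auto. }
      exists 1%nat, (1 - d). split. lra.
      intros x. simpl Nat.iter.
      set (M := vmax n x). set (m := vmin n x).
      assert (HxM : forall j, (j < n)%nat -> x j <= M) by (intros; apply vmax_ge; auto).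
      assert (Hxm : forall j, (j < n)%nat -> m <= x j) by (intros; apply vmin_le; auto).
      pose proof (HxM O Hn). pose proof (Hxm O Hn).
      assert (vmax n (matvec n (E m4) x) <= M - d * (M - x O)).
      { apply vmax_le; auto. intros i Hi. apply (mv_upper n (E m4) x M i O); auto; try lra.
        }
      assert (m + d * (x O - m) <= vmin n (matvec n (E m4) x)).
      { apply vmin_ge; auto. intros i Hi. apply (mv_lower n (E m4) x m i O); auto; try lra.
        }
      unfold sp. fold M m. nra.
Qed.
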